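(* Let $\{X_n;n\ge1\}$ be a sequence of independent random variables in a sub-linear expectation space $(\Omega,\mathscr H,\hat{\mathbb E})$ with $\hat{\mathbb E}[X_k^2]<\infty$ and $\hat{\mathbb E}[X_k]\le0$ for all $k$. Let $S_n=\sum_{k=1}^nX_k$, $V_n^2=\sum_{k=1}^nX_k^2$, $\overline B_n^2=\sum_{k=1}^n\hat{\mathbb E}[X_k^2]$, $\underline B_n^2=\sum_{k=1}^n\hat{\mathcal E}[X_k^2]>0$, $q_n=\overline B_n^2/\underline B_n^2$, $\Delta_{n,x}=\overline B_n^{-2}\sum_{k=1}^n\hat{\mathbb E}[X_k^2(1\wedge|xX_k/\overline B_n|)]$, and $\delta=\frac14\underline B_n^2/\overline B_n^2$. Then there is an absolute constant $C$ such that for all $x\ge2$, $$\mathbb V\big(S_n\ge xV_n,\ \delta\overline B_n^2\le V_n^2\le9\overline B_n^2\big)\le\exp\Big\{-\frac{x^2}{2}+Cq_n^{3/2}\big(\log x+x^2\Delta_{n,x}\big)\Big\}.$$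
   Context: Sub-linear expectation space: $\mathscr H$ is a linear space of real functions on a measurable space $(\Omega,\mathcal F)$, closed under $\varphi(X_1,\dots,X_n)$ for $\varphi$ bounded continuous or locally Lipschitz with polynomial growth; $\hat{\mathbb E}:\mathscr H\to[-\infty,\infty]$ is monotone, constant preserving, sub-additive and positively homogeneous. $\hat{\mathcal E}[X]=-\hat{\mathbb E}[-X]$; $\mathbb V(A)=\inf\{\hat{\mathbb E}[\xi]:I_A\le\xi,\xi\in\mathscr H\}$. Independence: $\mathbf Y$ is independent of $\mathbf X$ if $\hat{\mathbb E}[\varphi(\mathbf X,\mathbf Y)]=\hat{\mathbb E}[\hat{\mathbb E}[\varphi(\mathbf x,\mathbf Y)]|_{\mathbf x=\mathbf X}]$ for all locally Lipschitz $\varphi$ of polynomial growth (whenever the relevant expectations are finite); $\{X_n\}$ is independent if $X_{i+1}$ is independent of $(X_1,\dots,X_i)$ for each $i$. $a\wedge b=\min(a,b)$. *)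

(* Defs.v *)
From Stdlib Require Import Reals Lra Arith.
From Coquelicot Require Import Coquelicot.
Open Scope R_scope.

Fixpoint rsum (n : nat) (f : nat -> R) : R :=
  match n with O => 0 | S m => rsum m f + f m end.

Definition nrm (n : nat) (x : nat -> R) : R := rsum n (fun i => Rabs (x i)).

Definition Clip (n : nat) (phi : (nat -> R) -> R) : Prop :=
  exists (C : R) (m : nat), forall x y : nat -> R,
    Rabs (phi x - phi y) <=
      C * (1 + nrm n x ^ m + nrm n y ^ m) * nrm n (fun i => x i - y i).

Definition Cb (n : nat) (phi : (nat -> R) -> R) : Prop :=
  (exists M : R, forall x, Rabs (phi x) <= M) /\
  (forall x (eps : R), 0 < eps -> exists d : R, 0 < d /\
     forall y, nrm n (fun i => x i - y i) < d -> Rabs (phi x - phi y) < eps).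

Record SLE (Omega : Type) := mkSLE {
  H : (Omega -> R) -> Prop;
  E : (Omega -> R) -> Rbar;
  H_cst : forall c : R, H (fun _ => c);
  H_add : forall X Y, H X -> H Y -> H (fun w => X w + Y w);
  H_scal : forall (a : R) X, H X -> H (fun w => a * X w);
  H_comp : forall (n : nat) (Xs : nat -> Omega -> R) (phi : (nat -> R) -> R),
      (forall i, (i < n)%nat -> H (Xs i)) -> (Cb n phi \/ Clip n phi) ->
      H (fun w => phi (fun i => Xs i w));
  E_mono : forall X Y, H X -> H Y -> (forall w, X w <= Y w) -> Rbar_le (E X) (E Y);
  E_cst : forall c : R, E (fun _ => c) = Finite c;
  E_subadd : forall X Y, H X -> H Y -> ex_Rbar_plus (E X) (E Y) ->
      Rbar_le (E (fun w => X w + Y w)) (Rbar_plus (E X) (E Y));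
  E_poshom : forall (l : R) X, H X -> 0 < l ->
      E (fun w => l * X w) = Rbar_mult (Finite l) (E X)
}.
Arguments H {Omega}.
Arguments E {Omega}.

Definition Elow {Omega} (S : SLE Omega) (X : Omega -> R) : Rbar :=
  Rbar_opp (E S (fun w => - X w)).

Definition Vcap {Omega} (S : SLE Omega) (A : Omega -> Prop) : Rbar :=
  Rbar_glb (fun r => exists xi, H S xi /\
     (forall w, A w -> 1 <= xi w) /\ (forall w, 0 <= xi w) /\ r = E S xi).

(* The sequence X 0, X 1, ... (X k stands for the paper's X_{k+1}) is
   independent: for each i, X i is independent of (X 0, ..., X (i-1)).
   For phi locally Lipschitz in the first i+1 coordinates,
     E[phi(X_0..X_{i-1}, X_i)] = E[ psi(X_0..X_{i-1}) ],
     psi(x) = E[phi(x, X_i)],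
   whenever the relevant expectations are finite (and psi(X) is in H). *)
Definition indep_seq {Omega} (Sp : SLE Omega) (X : nat -> Omega -> R) : Prop :=
  forall (i : nat) (phi : (nat -> R) -> R), Clip (S i) phi ->
    let inner := fun x : nat -> R =>
      E Sp (fun w => phi (fun j => if Nat.ltb j i then x j else X i w)) in
    (forall x, is_finite (inner x)) ->
    H Sp (fun w => real (inner (fun j => X j w))) ->
    is_finite (E Sp (fun w => real (inner (fun j => X j w)))) ->
    E Sp (fun w => phi (fun j => X j w)) =
    E Sp (fun w => real (inner (fun j => X j w))).

(* Main.v *)
Require Import Defs.
From Stdlib Require Import Reals Lra Psatz FunctionalExtensionality Arith ZArith.
From Coquelicot Require Import Coquelicot.
Open Scope R_scope.

Lemma mono_deriv (f df : R -> R) (a b : R) :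
  (forall x, is_derive f x (df x)) -> (forall x, a <= x <= b -> 0 <= df x) ->
  a <= b -> f a <= f b.
Proof.
  intros Hd Hp Hab.
  destruct (MVT_gen f a b df) as [c [Hc Heq]].
  - intros x _; apply Hd.
  - intros x _. apply derivable_continuous_pt.
    exists (df x). apply is_derive_Reals, Hd.
  - rewrite Rmin_left in Hc by lra. rewrite Rmax_right in Hc by lra.
    assert (0 <= df c * (b - a)) by (apply Rmult_le_pos; [apply Hp; lra| lra]).
    lra.
Qed.

Lemma expG (s : R) : 0 <= s -> exp (- s) <= 1 - s + s ^ 2 / 2.
Proof.
  intros Hs.
  pose (f := fun s => 1 - s + s ^ 2 / 2 - exp (- s)).
  assert (f 0 <= f s).
  { apply (mono_deriv f (fun s => -1 + s + exp (- s))); auto.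
    - intros x; unfold f; auto_derive; auto; field.
    - intros x _. pose proof (exp_ineq1_le (- x)). lra. }
  unfold f in H. rewrite Ropp_0, exp_0 in H. lra.
Qed.

Lemma expF (s : R) : 0 <= s -> 1 - s + s ^ 2 / 2 - s ^ 3 / 6 <= exp (- s).
Proof.
  intros Hs.
  pose (f := fun s => exp (- s) - (1 - s + s ^ 2 / 2 - s ^ 3 / 6)).
  assert (f 0 <= f s).
  { apply (mono_deriv f (fun s => - exp (- s) + 1 - s + s ^ 2 / 2)); auto.
    - intros x; unfold f; auto_derive; auto; field.
    - intros x Hx. pose proof (expG x ltac:(lra)). lra. }
  unfold f in H. rewrite Ropp_0, exp_0 in H. lra.
Qed.

Lemma exp_le_mono (a b : R) : a <= b -> exp a <= exp b.
Proof. intros H; destruct (Rle_lt_or_eq_dec a b H) as [h|h]; [left; apply exp_increasing; auto| subst; lra]. Qed.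

Lemma exp_half_le2 : exp (1/2) <= 2.
Proof.
  pose proof exp_le_3. assert (exp 1 = exp (1/2) * exp (1/2)) by (rewrite <- exp_plus; f_equal; lra).
  pose proof (exp_pos (1/2)). nra.
Qed.

Lemma key_scalar (y : R) : exp (y - y ^ 2 / 2) <= 1 + y + 2 * (y ^ 2 * Rmin 1 (Rabs y)).
Proof.
  destruct (Rle_dec 1 (Rabs y)) as [Hy|Hy].
  - rewrite Rmin_left by lra.
    assert (exp (y - y ^ 2 / 2) <= exp (1/2)).
    { apply exp_le_mono. pose proof (pow2_ge_0 (y - 1)). simpl in *. lra. }
    pose proof exp_half_le2.
    assert (1 <= y * y) by (unfold Rabs in Hy; destruct (Rcase_abs y); nra).
    nra.
  - rewrite Rmin_right by lra.
    assert (Hy1 : -1 < y < 1) by (unfold Rabs in Hy; destruct (Rcase_abs y); lra).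
    destruct (Rle_dec (y - y ^ 2 / 2) 0) as [Hz|Hz].
    + pose proof (expG (- (y - y^2/2)) ltac:(lra)). rewrite Ropp_involutive in H.
      unfold Rabs; destruct (Rcase_abs y); nra.
    + apply Rnot_le_lt in Hz. set (z := y - y ^ 2 / 2) in *.
      assert (Hz1 : 0 < z <= 1/2) by (pose proof (pow2_ge_0 (y - 1)); unfold z in *; simpl in *; lra).
      assert (0 <= y) by (unfold z in Hz1; nra).
      pose proof (expF z ltac:(lra)).
      assert (Hp : 0 < 1 - z + z ^ 2 / 2 - z ^ 3 / 6) by nra.
      assert (exp z = / exp (- z)) by (rewrite exp_Ropp, Rinv_inv; auto).
      assert (exp z <= 1 + z + z^2/2 + z^3).
      { rewrite H1. pose proof (exp_pos (-z)).
        apply (Rmult_le_reg_r (exp (-z))); auto. rewrite Rinv_l by lra.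
        apply Rle_trans with ((1 + z + z^2/2 + z^3) * (1 - z + z ^ 2 / 2 - z ^ 3 / 6)).
        - nra.
        - apply Rmult_le_compat_l; nra. }
      rewrite Rabs_pos_eq by lra.
      assert (z <= y) by (unfold z; nra).
      assert (z^3 <= y^3) by (apply pow_incr; lra).
      unfold z in *; nra.
Qed.

Fixpoint rprod (n : nat) (f : nat -> R) : R :=
  match n with O => 1 | S m => rprod m f * f m end.

Lemma nrm_nonneg n x : 0 <= nrm n x.
Proof. induction n; simpl; unfold nrm in *; simpl; [lra|]. pose proof (Rabs_pos (x n)); lra. Qed.

Lemma abs_le_nrm n x k : (k < n)%nat -> Rabs (x k) <= nrm n x.
Proof.
  induction n; intros Hk; [lia|]. unfold nrm in *; simpl.
  destruct (Nat.eq_dec k n) as [->|Hne].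
  - pose proof (nrm_nonneg n x); unfold nrm in H; lra.
  - pose proof (IHn ltac:(lia)). pose proof (Rabs_pos (x n)); lra.
Qed.

Lemma rprod_abs (h : R -> R) M n x : 0 <= M -> (forall y, Rabs (h y) <= M) ->
  Rabs (rprod n (fun k => h (x k))) <= M ^ n.
Proof.
  intros HM Hh; induction n; simpl.
  - rewrite Rabs_R1; lra.
  - rewrite Rabs_mult. rewrite Rmult_comm. apply Rmult_le_compat; auto using Rabs_pos.
Qed.

Lemma clip_prod_bound (h : R -> R) M L :
  1 <= M -> 0 <= L -> (forall y, Rabs (h y) <= M) ->
  (forall y z, Rabs (h y - h z) <= L * (1 + Rabs y + Rabs z) * Rabs (y - z)) ->
  forall n x y, Rabs (rprod n (fun k => h (x k)) - rprod n (fun k => h (y k))) <=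
    M ^ n * L * (1 + nrm n x + nrm n y) * nrm n (fun i => x i - y i).
Proof.
  intros HM HL Hb Hl n x y. induction n.
  - simpl. unfold nrm; simpl. rewrite Rminus_diag, Rabs_R0. lra.
  - simpl rprod. change (nrm (S n) x) with (nrm n x + Rabs (x n)).
    change (nrm (S n) y) with (nrm n y + Rabs (y n)).
    change (nrm (S n) (fun i => x i - y i)) with (nrm n (fun i => x i - y i) + Rabs (x n - y n)).
    set (Px := rprod n (fun k => h (x k))) in *. set (Py := rprod n (fun k => h (y k))) in *.
    replace (Px * h (x n) - Py * h (y n)) with ((Px - Py) * h (x n) + Py * (h (x n) - h (y n))) by ring.
    eapply Rle_trans; [apply Rabs_triang|]. rewrite !Rabs_mult.
    pose proof (rprod_abs h M n y ltac:(lra) Hb) as HPy. fold Py in HPy.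
    pose proof (Hb (x n)). pose proof (Hl (x n) (y n)).
    pose proof (nrm_nonneg n x). pose proof (nrm_nonneg n y). pose proof (nrm_nonneg n (fun i => x i - y i)).
    pose proof (Rabs_pos (x n)). pose proof (Rabs_pos (y n)). pose proof (Rabs_pos (x n - y n)).
    pose proof (Rabs_pos (Px - Py)). pose proof (Rabs_pos Py). pose proof (Rabs_pos (h (x n))).
    pose proof (Rabs_pos (h (x n) - h (y n))).
    assert (HMn : 1 <= M ^ n) by (apply pow_R1_Rle; lra).
    set (A := nrm n x) in *. set (B := nrm n y) in *. set (D := nrm n (fun i => x i - y i)) in *.
    simpl pow.
    assert (T1 : Rabs (Px - Py) * Rabs (h (x n)) <= M ^ n * L * (1 + A + B) * D * M).
    { apply Rmult_le_compat; auto. }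
    assert (T2 : Rabs Py * Rabs (h (x n) - h (y n)) <= M ^ n * (L * (1 + Rabs (x n) + Rabs (y n)) * Rabs (x n - y n))).
    { apply Rmult_le_compat; auto. }
    assert (0 <= M ^ n * L) by (apply Rmult_le_pos; lra).
    assert (M ^ n * L * (1 + A + B) * D * M <= M * (M ^ n * L) * (1 + (A + Rabs (x n)) + (B + Rabs (y n))) * D).
    { replace (M ^ n * L * (1 + A + B) * D * M) with (M * (M ^ n * L) * (1 + A + B) * D) by ring.
      apply Rmult_le_compat_r; auto. apply Rmult_le_compat_l; [nra|]. lra. }
    assert (M ^ n * (L * (1 + Rabs (x n) + Rabs (y n)) * Rabs (x n - y n)) <=
            M * (M ^ n * L) * (1 + (A + Rabs (x n)) + (B + Rabs (y n))) * Rabs (x n - y n)).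
    { replace (M ^ n * (L * (1 + Rabs (x n) + Rabs (y n)) * Rabs (x n - y n))) with
        (1 * (M ^ n * L) * (1 + Rabs (x n) + Rabs (y n)) * Rabs (x n - y n)) by ring.
      apply Rmult_le_compat_r; auto. apply Rmult_le_compat; try nra. }
    nra.
Qed.

Lemma clip_prod (h : R -> R) M L :
  1 <= M -> 0 <= L -> (forall y, Rabs (h y) <= M) ->
  (forall y z, Rabs (h y - h z) <= L * (1 + Rabs y + Rabs z) * Rabs (y - z)) ->
  forall n, Clip n (fun z => rprod n (fun k => h (z k))).
Proof.
  intros. exists (M ^ n * L), 1%nat. intros x y.
  rewrite !pow_1. apply clip_prod_bound; auto.
Qed.

Lemma clip_mul2 : Clip 2 (fun z => z 0%nat * z 1%nat).
Proof.
  exists 1, 1%nat. intros x y. unfold nrm; simpl.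
  replace (x 0%nat * x 1%nat - y 0%nat * y 1%nat) with
    ((x 0%nat - y 0%nat) * x 1%nat + y 0%nat * (x 1%nat - y 1%nat)) by ring.
  eapply Rle_trans; [apply Rabs_triang|]. rewrite !Rabs_mult.
  pose proof (Rabs_pos (x 0%nat)); pose proof (Rabs_pos (x 1%nat)).
  pose proof (Rabs_pos (y 0%nat)); pose proof (Rabs_pos (y 1%nat)).
  pose proof (Rabs_pos (x 0%nat - y 0%nat)); pose proof (Rabs_pos (x 1%nat - y 1%nat)).
  nra.
Qed.

Lemma Rmin_lip p q p' q' : Rabs (Rmin p q - Rmin p' q') <= Rabs (p - p') + Rabs (q - q').
Proof.
  unfold Rmin; destruct (Rle_dec p q); destruct (Rle_dec p' q');
  unfold Rabs; repeat destruct Rcase_abs; lra.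
Qed.

Lemma clip_g (x b : R) : Clip 1 (fun z => z 0%nat ^ 2 * Rmin 1 (Rabs (x * z 0%nat / b))).
Proof.
  set (a := Rabs (x / b)).
  assert (Ha : 0 <= a) by apply Rabs_pos.
  exists (1 + 2 * a), 2%nat. intros u v. unfold nrm; simpl.
  set (y := u 0%nat). set (z := v 0%nat).
  assert (E : forall t, t * (t * 1) * Rmin 1 (Rabs (x * t / b)) = Rmin (t * t) (a * (Rabs t * (t * t)))).
  { intros t. rewrite Rmult_1_r, Rmult_comm, Rmult_min_distr_r by nra. f_equal; [ring|].
    unfold a. replace (x * t / b) with (x / b * t) by (unfold Rdiv; ring). rewrite Rabs_mult. ring. }
  rewrite !E. eapply Rle_trans; [apply Rmin_lip|].
  rewrite !Rplus_0_l.
  assert (H1 : Rabs (y * y - z * z) <= (Rabs y + Rabs z) * Rabs (y - z)).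
  { replace (y * y - z * z) with ((y + z) * (y - z)) by ring. rewrite Rabs_mult.
    apply Rmult_le_compat_r; [apply Rabs_pos| apply Rabs_triang]. }
  assert (H2 : Rabs (a * (Rabs y * (y * y)) - a * (Rabs z * (z * z))) <=
               a * ((y * y + z * z) * 3 / 2) * Rabs (y - z)).
  { rewrite <- Rmult_minus_distr_l, Rabs_mult, (Rabs_pos_eq a) by auto.
    rewrite Rmult_assoc. apply Rmult_le_compat_l; auto.
    set (p := Rabs y). set (q := Rabs z).
    assert (y * y = p * p) by (unfold p; rewrite <- Rabs_mult; rewrite Rabs_pos_eq; nra).
    assert (z * z = q * q) by (unfold q; rewrite <- Rabs_mult; rewrite Rabs_pos_eq; nra).
    rewrite H, H0.
    replace (p * (p * p) - q * (q * q)) with ((p - q) * (p * p + p * q + q * q)) by ring.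
    rewrite Rabs_mult. rewrite Rmult_comm.
    pose proof (Rabs_triang_inv2 y z) as T3. fold p q in T3.
    pose proof (Rabs_pos y) as T4; pose proof (Rabs_pos z) as T5. fold p q in T4, T5.
    rewrite (Rabs_pos_eq (p * p + p * q + q * q)) by nra.
    apply Rmult_le_compat; try nra. apply Rabs_pos. pose proof (pow2_ge_0 (p - q)); simpl in *; lra. }
  assert (0 <= Rabs (y - z)) by apply Rabs_pos.
  assert (Rabs y * Rabs y = y * y) by (rewrite <- Rabs_mult, Rabs_pos_eq; nra).
  assert (Rabs z * Rabs z = z * z) by (rewrite <- Rabs_mult, Rabs_pos_eq; nra).
  pose proof (Rabs_pos y); pose proof (Rabs_pos z).
  assert (Rabs y + Rabs z <= 1 + (y * y + z * z)).
  { pose proof (pow2_ge_0 (Rabs y - 1)); pose proof (pow2_ge_0 (Rabs z - 1)); simpl in *; nra. }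
  assert (Rabs y + Rabs z + a * ((y * y + z * z) * 3 / 2) <= (1 + 2 * a) * (1 + Rabs y * (Rabs y * 1) + Rabs z * (Rabs z * 1))) by nra.
  nra.
Qed.


Lemma exp_lip a b c : a <= c -> b <= c -> Rabs (exp a - exp b) <= exp c * Rabs (a - b).
Proof.
  intros Ha Hb.
  assert (K : forall a b, a <= b -> b <= c -> exp b - exp a <= exp c * (b - a)).
  { intros p q Hpq Hq. pose proof (exp_ineq1_le (p - q)).
    assert (exp p = exp q * exp (p - q)) by (rewrite <- exp_plus; f_equal; ring).
    pose proof (exp_pos q). pose proof (exp_le_mono q c Hq). nra. }
  destruct (Rle_dec a b).
  - pose proof (K a b r Hb). pose proof (exp_le_mono a b r).
    rewrite Rabs_left1 by lra. rewrite Rabs_left1 by lra. lra.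
  - pose proof (K b a ltac:(lra) Ha). pose proof (exp_le_mono b a ltac:(lra)).
    rewrite Rabs_pos_eq by lra. rewrite Rabs_pos_eq by lra. lra.
Qed.

Definition fl (l y : R) : R := exp (l * y - l ^ 2 * y ^ 2 / 2).

Lemma fl_pos l y : 0 < fl l y.
Proof. apply exp_pos. Qed.

Lemma fl_arg l y : l * y - l ^ 2 * y ^ 2 / 2 <= 1/2.
Proof. pose proof (pow2_ge_0 (l * y - 1)). simpl in *. lra. Qed.

Lemma fl_bound l y : Rabs (fl l y) <= exp (1/2).
Proof. rewrite Rabs_pos_eq by (left; apply fl_pos). apply exp_le_mono, fl_arg. Qed.

Lemma fl_lip l y z : Rabs (fl l y - fl l z) <=
  (exp (1/2) * (Rabs l + l ^ 2)) * (1 + Rabs y + Rabs z) * Rabs (y - z).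
Proof.
  unfold fl. eapply Rle_trans; [apply exp_lip; apply fl_arg|].
  rewrite Rmult_assoc, Rmult_assoc. apply Rmult_le_compat_l; [left; apply exp_pos|].
  replace (l * y - l ^ 2 * y ^ 2 / 2 - (l * z - l ^ 2 * z ^ 2 / 2)) with
    ((y - z) * (l - l ^ 2 * (y + z) / 2)) by field.
  rewrite Rabs_mult, Rmult_comm. rewrite <- Rmult_assoc.
  apply Rmult_le_compat_r; [apply Rabs_pos|].
  eapply Rle_trans; [apply Rabs_triang|]. rewrite Rabs_Ropp.
  replace (l ^ 2 * (y + z) / 2) with (l ^ 2 * ((y + z) / 2)) by (unfold Rdiv; ring).
  rewrite Rabs_mult, (Rabs_pos_eq (l ^ 2)) by apply pow2_ge_0.
  assert (Rabs ((y + z) / 2) <= Rabs y + Rabs z).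
  { unfold Rdiv. rewrite Rabs_mult. rewrite (Rabs_pos_eq (/2)) by lra.
    pose proof (Rabs_triang y z). pose proof (Rabs_pos (y + z)). lra. }
  pose proof (Rabs_pos l). pose proof (pow2_ge_0 l). pose proof (Rabs_pos y). pose proof (Rabs_pos z).
  nra.
Qed.

Section SLEfacts.
Context {Omega : Type} (S : SLE Omega).

Lemma H_ext X Y : (forall w, X w = Y w) -> H S X -> H S Y.
Proof. intros e; replace Y with X; auto. apply functional_extensionality; auto. Qed.

Lemma E_ext X Y : (forall w, X w = Y w) -> E S X = E S Y.
Proof. intros e; replace Y with X; auto. apply functional_extensionality; auto. Qed.

Lemma E_ge_cst X c : H S X -> (forall w, c <= X w) -> Rbar_le (Finite c) (E S X).
Proof. intros HX Hc. rewrite <- (E_cst _ S c). apply E_mono; auto. apply H_cst. Qed.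

Lemma E_le_cst X c : H S X -> (forall w, X w <= c) -> Rbar_le (E S X) (Finite c).
Proof. intros HX Hc. rewrite <- (E_cst _ S c). apply E_mono; auto. apply H_cst. Qed.

Lemma E_finite_between X a b : H S X -> (forall w, a <= X w <= b) -> E S X = Finite (real (E S X)).
Proof.
  intros HX Hab. pose proof (E_ge_cst X a HX (fun w => proj1 (Hab w))).
  pose proof (E_le_cst X b HX (fun w => proj2 (Hab w))).
  destruct (E S X); simpl in *; tauto.
Qed.

Lemma E_scal_fin (l : R) X r : H S X -> 0 < l -> E S X = Finite r -> E S (fun w => l * X w) = Finite (l * r).
Proof. intros HX Hl Hr. rewrite E_poshom; auto. rewrite Hr. reflexivity. Qed.

End SLEfacts.

Lemma rprod_ext n f g : (forall k, (k < n)%nat -> f k = g k) -> rprod n f = rprod n g.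
Proof.
  induction n; intros Hfg; simpl; auto.
  rewrite IHn by (intros; apply Hfg; lia). rewrite (Hfg n) by lia. auto.
Qed.

Lemma rprod_pos n f : (forall k, 0 < f k) -> 0 < rprod n f.
Proof. intros Hf; induction n; simpl; [lra|]. apply Rmult_lt_0_compat; auto. Qed.

Section Indep.
Context {Omega : Type} (Sp : SLE Omega) (X : nat -> Omega -> R) (h : R -> R) (M L : R).
Hypothesis HX : forall k, H Sp (X k).
Hypothesis Hind : indep_seq Sp X.
Hypothesis HM : 1 <= M.
Hypothesis HL : 0 <= L.
Hypothesis Hpos : forall y, 0 < h y.
Hypothesis Hb : forall y, Rabs (h y) <= M.
Hypothesis Hl : forall y z, Rabs (h y - h z) <= L * (1 + Rabs y + Rabs z) * Rabs (y - z).

Lemma H_prod i : H Sp (fun w => rprod i (fun k => h (X k w))).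
Proof.
  apply (H_comp _ Sp i X (fun z => rprod i (fun k => h (z k)))); auto.
  right; apply (clip_prod h M L); auto.
Qed.

Lemma H_h k : H Sp (fun w => h (X k w)).
Proof.
  pose proof (H_comp _ Sp 1 (fun _ => X k) (fun z => rprod 1 (fun j => h (z j)))) as T.
  eapply H_ext; [| apply T; auto; right; apply (clip_prod h M L); auto].
  intros w; simpl; ring.
Qed.

Lemma E_h_fin k : E Sp (fun w => h (X k w)) = Finite (real (E Sp (fun w => h (X k w)))).
Proof.
  apply (E_finite_between Sp _ 0 M (H_h k)). intros w. pose proof (Hpos (X k w)).
  pose proof (Hb (X k w)). rewrite Rabs_pos_eq in H0; lra.
Qed.

Lemma E_h_nonneg k : 0 <= real (E Sp (fun w => h (X k w))).
Proof.
  pose proof (E_ge_cst Sp _ 0 (H_h k) (fun w => Rlt_le _ _ (Hpos (X k w)))).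
  rewrite E_h_fin in H. simpl in H. auto.
Qed.

Lemma E_prod i : E Sp (fun w => rprod i (fun k => h (X k w))) =
   Finite (rprod i (fun k => real (E Sp (fun w => h (X k w))))).
Proof.
  induction i.
  - simpl. apply E_cst.
  - set (e := real (E Sp (fun w => h (X i w)))).
    assert (Ee : E Sp (fun w => h (X i w)) = Finite e) by apply E_h_fin.
    assert (He : 0 <= e) by apply E_h_nonneg.
    pose proof (Hind i (fun z => rprod (S i) (fun k => h (z k)))
       (clip_prod h M L HM HL Hb Hl (S i))) as T.
    cbv beta zeta in T.
    assert (Claim : forall x : nat -> R,
      E Sp (fun w => rprod (S i) (fun k => h (if Nat.ltb k i then x k else X i w))) =
      Finite (rprod i (fun k => h (x k)) * e)).
    { intros x.
      rewrite (E_ext Sp _ (fun w => rprod i (fun k => h (x k)) * h (X i w))).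
      - apply E_scal_fin; auto using H_h. apply rprod_pos; auto.
      - intros w. simpl. rewrite Nat.ltb_irrefl. f_equal.
        apply rprod_ext. intros k Hk. apply Nat.ltb_lt in Hk. rewrite Hk. auto. }
    assert (Fe : forall w, real (E Sp (fun w0 => rprod (S i)
         (fun k => h (if Nat.ltb k i then X k w else X i w0)))) =
         e * rprod i (fun k => h (X k w))).
    { intros w. rewrite Claim. simpl. ring. }
    assert (HPe : H Sp (fun w => e * rprod i (fun k => h (X k w)))) by (apply H_scal, H_prod).
    assert (EPe : E Sp (fun w => e * rprod i (fun k => h (X k w))) =
                  Finite (e * rprod i (fun k => real (E Sp (fun w => h (X k w)))))).
    { destruct (Req_dec e 0) as [E0|E0].
      - rewrite E0. rewrite (E_ext Sp _ (fun _ => 0)) by (intros; ring).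
        rewrite E_cst. f_equal; ring.
      - apply E_scal_fin; auto. apply H_prod. lra. }
    rewrite T.
    + rewrite (E_ext Sp _ _ Fe), EPe. simpl. f_equal. fold e. ring.
    + intros x. rewrite Claim. reflexivity.
    + eapply H_ext; [| apply HPe]. intros w. rewrite Fe. auto.
    + rewrite (E_ext Sp _ _ Fe), EPe. reflexivity.
Qed.
End Indep.

Lemma rsum_le n f g : (forall k, (k < n)%nat -> f k <= g k) -> rsum n f <= rsum n g.
Proof. induction n; intros Hk; simpl; [lra|]. pose proof (Hk n ltac:(lia)). pose proof (IHn ltac:(intros; apply Hk; lia)). lra. Qed.

Lemma rsum_nonneg n f : (forall k, 0 <= f k) -> 0 <= rsum n f.
Proof. intros Hf; induction n; simpl; [lra|]. pose proof (Hf n); lra. Qed.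

Lemma rsum_ge_term n f j : (forall k, 0 <= f k) -> (j < n)%nat -> f j <= rsum n f.
Proof.
  intros Hf; induction n; intros Hj; [lia|]. simpl.
  destruct (Nat.eq_dec j n) as [->|Hne].
  - pose proof (rsum_nonneg n f Hf); lra.
  - pose proof (IHn ltac:(lia)); pose proof (Hf n); lra.
Qed.

Lemma rprod_le n a b : (forall k, 0 <= a k <= b k) -> rprod n a <= rprod n b.
Proof.
  intros Hab; induction n; simpl; [lra|].
  assert (0 <= rprod n a) by (clear IHn; induction n; simpl; [lra|]; pose proof (Hab n); nra).
  apply Rmult_le_compat; auto; apply Hab.
Qed.

Lemma rprod_exp n f : rprod n (fun k => exp (f k)) = exp (rsum n f).
Proof. induction n; simpl; [rewrite exp_0; auto|]. rewrite IHn, exp_plus; auto. Qed.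

Lemma pow_bernoulli (h : R) N : 0 <= h -> 1 + INR N * h <= (1 + h) ^ N.
Proof.
  intros Hh; induction N; [simpl; lra|].
  rewrite S_INR. change ((1 + h) ^ S N) with ((1 + h) * (1 + h) ^ N). pose proof (pos_INR N). nra.
Qed.

Lemma grid (u0 r V : R) N : 0 < u0 -> 1 <= r -> u0 <= V -> V <= u0 * r ^ N ->
  exists j, (j <= N)%nat /\ u0 * r ^ j <= V <= u0 * r ^ (S j).
Proof.
  intros Hu Hr Hl; induction N; intros Hh.
  - exists 0%nat; split; [lia|]. simpl in *. nra.
  - destruct (Rle_dec V (u0 * r ^ N)) as [h|h].
    + destruct (IHN h) as [j [Hj Hj2]]. exists j; split; [lia|auto].
    + exists N; split; [lia|]. split; [lra|auto].
Qed.

Lemma min_scale s t : 0 <= s -> 0 <= t -> Rmin 1 (s * t) <= (1 + s) * Rmin 1 t.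
Proof.
  intros Hs Ht. unfold Rmin. destruct (Rle_dec 1 (s * t)); destruct (Rle_dec 1 t); nra.
Qed.

Lemma pointwise_fl (x u b y : R) : 0 < u -> 0 < b ->
  fl (x / u) y <= 1 + (x / u) * y + (2 * (x / u) ^ 2 * (1 + b / u)) * (y ^ 2 * Rmin 1 (Rabs (x * y / b))).
Proof.
  intros Hu Hb. unfold fl.
  replace ((x / u) ^ 2 * y ^ 2) with (((x / u) * y) ^ 2) by (rewrite Rpow_mult_distr; auto).
  eapply Rle_trans; [apply key_scalar|].
  rewrite Rpow_mult_distr.
  assert (Rabs (x / u * y) = (b / u) * Rabs (x * y / b)).
  { replace (x / u * y) with ((b / u) * (x * y / b)) by (field; lra).
    rewrite Rabs_mult, (Rabs_pos_eq (b / u)); auto. apply Rlt_le, Rdiv_lt_0_compat; auto. }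
  rewrite H.
  pose proof (min_scale (b / u) (Rabs (x * y / b)) ltac:(apply Rlt_le, Rdiv_lt_0_compat; auto) (Rabs_pos _)).
  pose proof (pow2_ge_0 (x / u)). pose proof (pow2_ge_0 y).
  assert (0 <= (x / u) ^ 2 * y ^ 2) by nra.
  assert ((x / u) ^ 2 * y ^ 2 * Rmin 1 (b / u * Rabs (x * y / b)) <=
          (x / u) ^ 2 * y ^ 2 * ((1 + b / u) * Rmin 1 (Rabs (x * y / b)))) by (apply Rmult_le_compat_l; auto).
  lra.
Qed.

Section Sums.
Context {Omega : Type} (Sp : SLE Omega).

Lemma H_rsum m (F : nat -> Omega -> R) : (forall j, H Sp (F j)) -> H Sp (fun w => rsum m (fun j => F j w)).
Proof.
  intros HF; induction m; simpl.
  - apply H_cst.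
  - apply (H_add _ Sp (fun w => rsum m (fun j => F j w)) (F m)); auto.
Qed.

Lemma E_rsum_le m (F : nat -> Omega -> R) (c a : nat -> R) :
  (forall j, H Sp (F j)) -> (forall j, E Sp (F j) = Finite (c j)) -> (forall j, c j <= a j) ->
  Rbar_le (E Sp (fun w => rsum m (fun j => F j w))) (Finite (rsum m a)).
Proof.
  intros HF Ec Hca; induction m; simpl.
  - rewrite E_cst. simpl; lra.
  - eapply Rbar_le_trans.
    + apply (E_subadd _ Sp (fun w => rsum m (fun j => F j w)) (F m)); auto using H_rsum.
      rewrite Ec. destruct (E Sp (fun w => rsum m (fun j => F j w))); simpl; auto.
    + rewrite Ec. pose proof (Hca m).
      destruct (E Sp (fun w => rsum m (fun j => F j w))); simpl in *; auto; lra.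
Qed.
End Sums.

Lemma rsum_lin n (a c : R) f g : rsum n (fun k => a * f k - c * g k / 2) = a * rsum n f - c * rsum n g / 2.
Proof. induction n; simpl; [field|]. rewrite IHn. field. Qed.

Lemma rsum_const n c : rsum n (fun _ => c) = INR n * c.
Proof. induction n; simpl rsum; [simpl; ring|]. rewrite IHn, S_INR. ring. Qed.

Lemma event_arg x u V Sv : 2 <= x -> 0 < u -> u <= V <= u * (1 + / x) -> Sv >= x * V ->
  0 <= 1/2 - x^2/2 + ((x/u) * Sv - (x/u)^2 * (V*V) / 2).
Proof.
  intros Hx Hu [H1 H2] HS.
  assert (Hl : 0 < x / u) by (apply Rdiv_lt_0_compat; lra).
  assert (x / u * Sv >= x / u * (x * V)) by (apply Rle_ge, Rmult_le_compat_l; lra).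
  set (d := x / u * V - x).
  assert (Hd : d = x * (V - u) / u) by (unfold d; field; lra).
  assert (0 <= d <= 1).
  { rewrite Hd. split.
    - apply Rmult_le_pos; [apply Rmult_le_pos; lra| left; apply Rinv_0_lt_compat; lra].
    - apply (Rmult_le_reg_r u); auto. unfold Rdiv. rewrite Rmult_assoc, Rinv_l, Rmult_1_r by lra.
      assert (V - u <= u / x) by (unfold Rdiv; lra).
      apply (Rmult_le_compat_l x) in H0; [|lra]. unfold Rdiv in H0.
      rewrite <- Rmult_assoc, (Rmult_comm x u), Rmult_assoc, Rinv_r, Rmult_1_r in H0 by lra. lra. }
  assert (1/2 - x^2/2 + ((x/u) * (x * V) - (x/u)^2 * (V*V) / 2) = (1 - d * d) / 2).
  { unfold d. field. lra. }
  nra.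
Qed.

Lemma cbound x u s b : 0 < s -> s <= b -> s / 2 <= u -> 0 < x ->
  2 * (x / u) ^ 2 * (1 + b / u) * (b * b) <= 24 * ((b * b) / (s * s) * (b / s)) * x ^ 2.
Proof.
  intros Hs Hsb Hu Hx.
  assert (Hu0 : 0 < u) by lra.
  set (t := b / s).
  assert (Ht : 1 <= t) by (unfold t; apply (Rmult_le_reg_r s); auto; unfold Rdiv; rewrite Rmult_assoc, Rinv_l; lra).
  assert (Hb : b = t * s) by (unfold t; field; lra).
  assert (Hiu : / u <= 2 / s).
  { apply (Rmult_le_reg_r u); auto. rewrite Rinv_l by lra. apply (Rmult_le_reg_r s); auto.
    unfold Rdiv. rewrite Rmult_1_l. replace (2 * / s * u * s) with (2 * u) by (field; lra). lra. }
  assert (Hxu : (x / u) ^ 2 <= 4 * x ^ 2 / (s * s)).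
  { unfold Rdiv. rewrite Rpow_mult_distr.
    assert (0 <= / u) by (left; apply Rinv_0_lt_compat; lra).
    assert ((/ u) ^ 2 <= (2 / s) ^ 2) by (apply pow_incr; lra).
    replace (4 * x ^ 2 * / (s * s)) with (x ^ 2 * (2 / s) ^ 2) by (field; lra).
    apply Rmult_le_compat_l; auto. apply pow2_ge_0. }
  assert (Hbu : b / u <= 2 * t).
  { unfold Rdiv. rewrite Hb. replace (2 * t) with (t * s * (2 / s)) by (field; lra).
    apply Rmult_le_compat_l. nra. exact Hiu. }
  assert (Hbu0 : 0 <= b / u) by (apply Rmult_le_pos; [lra| left; apply Rinv_0_lt_compat; lra]).
  assert (E1 : 2 * (x / u) ^ 2 * (1 + b / u) * (b * b) <= 2 * (4 * x ^ 2 / (s * s)) * (1 + 2 * t) * (b * b)).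
  { apply Rmult_le_compat_r; [nra|]. apply Rmult_le_compat; try nra. }
  assert (E2 : 2 * (4 * x ^ 2 / (s * s)) * (1 + 2 * t) * (b * b) = 8 * x ^ 2 * t * t * (1 + 2 * t)).
  { rewrite Hb. field. lra. }
  assert (E3 : 24 * ((b * b) / (s * s) * t) * x ^ 2 = 24 * x ^ 2 * t * t * t).
  { rewrite Hb. field. lra. }
  rewrite E3. pose proof (pow2_ge_0 x). nra.
Qed.

Lemma ln_ge_half x : 2 <= x -> / 2 <= ln x.
Proof. intros Hx. pose proof ln_lt_2. pose proof (ln_le 2 x ltac:(lra) Hx). lra. Qed.

Lemma ln_le_sub1 a : 0 < a -> ln a <= a - 1.
Proof. intros Ha. pose proof (exp_ineq1_le (ln a)). rewrite exp_ln in H; lra. Qed.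

Lemma final_ineq x q N D : 2 <= x -> 1 <= q -> 0 <= D -> INR N <= 6 * x * sqrt q + 1 ->
  INR (S N) * (exp (1/2 - x^2/2) * exp (24 * (q * sqrt q) * x ^ 2 * D)) <=
  exp (- x ^ 2 / 2 + 100 * (q * sqrt q) * (ln x + x ^ 2 * D)).
Proof.
  intros Hx Hq HD HN.
  assert (Hsq : 1 <= sqrt q) by (rewrite <- sqrt_1; apply sqrt_le_1; lra).
  set (r := sqrt q) in *. set (Q := q * r).
  assert (HQ : r <= Q) by (unfold Q; nra).
  assert (HSN : 0 < INR (S N)) by (apply lt_0_INR; lia).
  rewrite S_INR in *.
  assert (HN8 : INR N + 1 <= 8 * x * r) by nra.
  pose proof (ln_ge_half x Hx) as Hlx.
  assert (Hln : ln (INR N + 1) <= ln x + 8 * r - 1).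
  { eapply Rle_trans; [apply ln_le; [lra|exact HN8]|].
    replace (8 * x * r) with (x * (8 * r)) by ring. rewrite ln_mult by lra.
    pose proof (ln_le_sub1 (8 * r) ltac:(lra)). lra. }
  rewrite <- (exp_ln (INR N + 1)) at 1 by lra.
  rewrite <- !exp_plus. apply exp_le_mono.
  pose proof (pow2_ge_0 x).
  assert (0 <= Q * (x ^ 2 * D)) by (apply Rmult_le_pos; nra).
  assert (0 <= ln x) by lra.
  assert (r * ln x <= Q * ln x) by nra.
  assert (ln x <= Q * ln x) by nra.
  nra.
Qed.

Lemma e_bound {Omega} (Sp : SLE Omega) (Y : Omega -> R) (x u b G : R) :
  H Sp Y -> Rbar_le (E Sp Y) (Finite 0) -> 0 < u -> 0 < b -> 0 < x ->
  H Sp (fun w => Y w ^ 2 * Rmin 1 (Rabs (x * Y w / b))) ->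
  E Sp (fun w => Y w ^ 2 * Rmin 1 (Rabs (x * Y w / b))) = Finite G ->
  Rbar_le (E Sp (fun w => fl (x / u) (Y w))) (Finite (1 + (2 * (x / u) ^ 2 * (1 + b / u)) * G)).
Proof.
  intros HY HmY Hu Hb Hx Hg EG.
  set (c := 2 * (x / u) ^ 2 * (1 + b / u)).
  assert (Hc : 0 < c).
  { unfold c. assert (0 < x / u) by (apply Rdiv_lt_0_compat; lra).
    assert (0 < b / u) by (apply Rdiv_lt_0_compat; lra). pose proof (pow_lt (x/u) 2 H). nra. }
  assert (HA : H Sp (fun w => 1 + x / u * Y w)) by (apply (H_add _ Sp (fun _ => 1)); [apply H_cst| apply H_scal; auto]).
  assert (HB : H Sp (fun w => c * (Y w ^ 2 * Rmin 1 (Rabs (x * Y w / b))))) by (apply H_scal; auto).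
  assert (Hf : H Sp (fun w => fl (x / u) (Y w))).
  { pose proof (H_comp _ Sp 1 (fun _ => Y) (fun z => rprod 1 (fun j => fl (x / u) (z j))) (fun _ _ => HY)) as T.
    eapply H_ext; [| apply T; right; apply (clip_prod _ (exp (1/2)) (exp (1/2) * (Rabs (x/u) + (x/u)^2)))].
    - intros w; simpl; ring.
    - pose proof (exp_le_mono 0 (1/2) ltac:(lra)) as T0; rewrite exp_0 in T0; exact T0.
    - apply Rmult_le_pos; [left; apply exp_pos|]. pose proof (Rabs_pos (x/u)); pose proof (pow2_ge_0 (x/u)); lra.
    - apply fl_bound.
    - apply fl_lip. }
  eapply Rbar_le_trans.
  - apply (E_mono _ Sp _ (fun w => (1 + x / u * Y w) + c * (Y w ^ 2 * Rmin 1 (Rabs (x * Y w / b))))); auto.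
    + apply (H_add _ Sp (fun w => 1 + x / u * Y w) (fun w => c * (Y w ^ 2 * Rmin 1 (Rabs (x * Y w / b))))); auto.
    + intros w. apply pointwise_fl; auto.
  - eapply Rbar_le_trans.
    + apply (E_subadd _ Sp (fun w => 1 + x / u * Y w) (fun w => c * (Y w ^ 2 * Rmin 1 (Rabs (x * Y w / b))))); auto.
      rewrite E_poshom, EG by auto. destruct (E Sp (fun w => 1 + x / u * Y w)); simpl; auto.
    + rewrite E_poshom, EG by auto.
      assert (HA2 : Rbar_le (E Sp (fun w => 1 + x / u * Y w)) (Finite 1)).
      { eapply Rbar_le_trans.
        - apply (E_subadd _ Sp (fun _ => 1) (fun w => x / u * Y w)); [apply H_cst| apply H_scal; auto|].
          rewrite E_cst. simpl. destruct (E Sp (fun w => x / u * Y w)); simpl; auto.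
        - rewrite E_cst, E_poshom by (auto; apply Rdiv_lt_0_compat; lra).
          assert (0 < x / u) by (apply Rdiv_lt_0_compat; lra).
          destruct (E Sp Y); simpl in *; try tauto.
          + pose proof (Rmult_le_compat_l (x/u) r 0 ltac:(lra) HmY). lra.
          + destruct (Rle_dec 0 (x / u)); [|lra]. destruct (Rle_lt_or_eq_dec 0 (x/u) r); simpl; auto; lra. }
      destruct (E Sp (fun w => 1 + x / u * Y w)); simpl in *; auto; lra.
Qed.

Lemma rsum_scal n c f : rsum n (fun k => c * f k) = c * rsum n f.
Proof. induction n; simpl; [ring|]. rewrite IHn. ring. Qed.

Theorem proposition6p3 :
  exists C : R,
  forall (Omega : Type) (S : SLE Omega) (X : nat -> Omega -> R) (n : nat) (x : R),
    (forall k, H S (X k)) ->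
    indep_seq S X ->
    (forall k, Rbar_lt (E S (fun w => X k w ^ 2)) p_infty) ->
    (forall k, Rbar_le (E S (X k)) (Finite 0)) ->
    let Sn := fun w => rsum n (fun k => X k w) in
    let Vn2 := fun w => rsum n (fun k => X k w ^ 2) in
    let Bup2 := rsum n (fun k => real (E S (fun w => X k w ^ 2))) in
    let Blow2 := rsum n (fun k => real (Elow S (fun w => X k w ^ 2))) in
    0 < Blow2 ->
    let qn := Bup2 / Blow2 in
    let Delta := / Bup2 * rsum n (fun k =>
          real (E S (fun w => X k w ^ 2 * Rmin 1 (Rabs (x * X k w / sqrt Bup2))))) in
    let delta := / 4 * Blow2 / Bup2 in
    2 <= x ->
    Rbar_le
      (Vcap S (fun w => Sn w >= x * sqrt (Vn2 w) /\
                        delta * Bup2 <= Vn2 w <= 9 * Bup2))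
      (Finite (exp (- x ^ 2 / 2 + C * Rpower qn (3 / 2) * (ln x + x ^ 2 * Delta)))).
Proof.
  exists 100.
  intros Omega S X n x HX Hind H2fin Hmean Sn Vn2 Bup2 Blow2 Hlow qn Delta delta Hx.
  assert (HX2 : forall k, H S (fun w => X k w ^ 2)).
  { intros k. pose proof (H_comp _ S 2 (fun _ => X k) (fun z => z 0%nat * z 1%nat) (fun _ _ => HX k) (or_intror clip_mul2)) as T.
    eapply H_ext; [|exact T]. intros w; simpl; ring. }
  assert (E2 : forall k, E S (fun w => X k w ^ 2) = Finite (real (E S (fun w => X k w ^ 2)))).
  { intros k. pose proof (E_ge_cst S _ 0 (HX2 k) (fun w => pow2_ge_0 _)). pose proof (H2fin k).
    destruct (E S (fun w => X k w ^ 2)); simpl in *; tauto. }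
  assert (E2nn : forall k, 0 <= real (E S (fun w => X k w ^ 2))).
  { intros k. pose proof (E_ge_cst S _ 0 (HX2 k) (fun w => pow2_ge_0 _)). rewrite E2 in H. exact H. }
  assert (Hlowup : forall k, real (Elow S (fun w => X k w ^ 2)) <= real (E S (fun w => X k w ^ 2))).
  { intros k. unfold Elow. cbv beta.
    assert (Hn : H S (fun w => - (X k w ^ 2))).
    { eapply H_ext; [|apply (H_scal _ S (-1) _ (HX2 k))]. intros; cbv beta; ring. }
    pose proof (E_le_cst S _ 0 Hn (fun w => ltac:(pose proof (pow2_ge_0 (X k w)); lra))) as T1.
    assert (ex_Rbar_plus (E S (fun w => X k w ^ 2)) (E S (fun w => - X k w ^ 2))).
    { rewrite E2. destruct (E S (fun w => - X k w ^ 2)); simpl; auto. }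
    pose proof (E_subadd _ S _ _ (HX2 k) Hn H) as T2.
    rewrite (E_ext S _ (fun _ => 0)) in T2 by (intros; ring). rewrite E_cst in T2.
    pose proof (E2nn k). rewrite E2 in T2.
    destruct (E S (fun w => - X k w ^ 2)); simpl in *; try tauto; lra. }
  assert (Hlu : Blow2 <= Bup2) by (apply rsum_le; auto).
  assert (HBup : 0 < Bup2) by lra.
  pose proof (E_ge_cst S) as Dummy; clear Dummy.
  assert (Hg : forall k, H S (fun w => X k w ^ 2 * Rmin 1 (Rabs (x * X k w / sqrt Bup2)))).
  { intros k. exact (H_comp _ S 1 (fun _ => X k) _ (fun _ _ => HX k) (or_intror (clip_g x (sqrt Bup2)))). }
  assert (Eg : forall k, E S (fun w => X k w ^ 2 * Rmin 1 (Rabs (x * X k w / sqrt Bup2))) =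
     Finite (real (E S (fun w => X k w ^ 2 * Rmin 1 (Rabs (x * X k w / sqrt Bup2)))))).
  { intros k.
    assert (Hp : forall w, 0 <= X k w ^ 2 * Rmin 1 (Rabs (x * X k w / sqrt Bup2)) <= X k w ^ 2).
    { intros w. pose proof (pow2_ge_0 (X k w)). pose proof (Rabs_pos (x * X k w / sqrt Bup2)).
      assert (0 <= Rmin 1 (Rabs (x * X k w / sqrt Bup2)) <= 1) by (unfold Rmin; destruct Rle_dec; lra).
      nra. }
    pose proof (E_ge_cst S _ 0 (Hg k) (fun w => proj1 (Hp w))).
    pose proof (E_mono _ S _ _ (Hg k) (HX2 k) (fun w => proj2 (Hp w))). rewrite E2 in H0.
    destruct (E S (fun w => X k w ^ 2 * Rmin 1 (Rabs (x * X k w / sqrt Bup2)))); simpl in *; tauto. }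
  assert (Gnn : forall k, 0 <= real (E S (fun w => X k w ^ 2 * Rmin 1 (Rabs (x * X k w / sqrt Bup2))))).
  { intros k. pose proof (E_ge_cst S _ 0 (Hg k) (fun w => ltac:(pose proof (pow2_ge_0 (X k w));
       pose proof (Rabs_pos (x * X k w / sqrt Bup2)); assert (0 <= Rmin 1 (Rabs (x * X k w / sqrt Bup2))) by (unfold Rmin; destruct Rle_dec; lra); nra))).
    rewrite Eg in H. exact H. }
  set (G := fun k => real (E S (fun w => X k w ^ 2 * Rmin 1 (Rabs (x * X k w / sqrt Bup2))))) in *.
  assert (HDelta : 0 <= Delta).
  { unfold Delta. apply Rmult_le_pos; [left; apply Rinv_0_lt_compat; auto| apply rsum_nonneg; auto]. }
  assert (HsumG : rsum n G = Bup2 * Delta) by (unfold Delta; field; lra).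
  set (b := sqrt Bup2) in *. set (s := sqrt Blow2).
  assert (Hb : 0 < b) by (apply sqrt_lt_R0; auto).
  assert (Hs : 0 < s) by (apply sqrt_lt_R0; auto).
  assert (Hbb : b * b = Bup2) by (apply sqrt_sqrt; lra).
  assert (Hss : s * s = Blow2) by (apply sqrt_sqrt; lra).
  assert (Hsb : s <= b) by (apply sqrt_le_1; lra).
  assert (Hq1 : 1 <= qn) by (unfold qn; apply (Rmult_le_reg_r Blow2); auto; unfold Rdiv; rewrite Rmult_assoc, Rinv_l; lra).
  assert (Hsq : sqrt qn = b / s) by (unfold qn, b, s; apply sqrt_div; lra).
  assert (HRp : Rpower qn (3 / 2) = qn * sqrt qn).
  { replace (3 / 2) with (1 + / 2) by field. rewrite Rpower_plus, Rpower_1, Rpower_sqrt; lra. }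
  rewrite HRp.
  destruct (archimed (6 * x * sqrt qn)) as [Hup1 Hup2].
  set (z := up (6 * x * sqrt qn)) in *.
  assert (Hsqp : 0 < sqrt qn) by (apply sqrt_lt_R0; lra).
  assert (Hz : (0 <= z)%Z) by (apply le_IZR; nra).
  set (N := Z.to_nat z).
  assert (HNz : INR N = IZR z) by (unfold N; rewrite INR_IZR_INZ, Z2Nat.id; auto).
  assert (HN1 : 6 * x * sqrt qn <= INR N) by lra.
  assert (HN2 : INR N <= 6 * x * sqrt qn + 1) by lra.
  set (r := 1 + / x).
  assert (Hr : 1 <= r) by (unfold r; assert (0 < / x) by (apply Rinv_0_lt_compat; lra); lra).
  set (u0 := s / 2).
  set (u := fun j => u0 * r ^ j).
  assert (Hu : forall j, u0 <= u j).
  { intros j. unfold u. pose proof (pow_R1_Rle r j Hr). unfold u0. nra. }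
  assert (Hu0 : 0 < u0) by (unfold u0; lra).
  set (K := exp (1/2 - x^2/2)).
  set (Q := qn * sqrt qn) in *.
  set (T := K * exp (24 * Q * x ^ 2 * Delta)).
  set (P := fun j w => rprod n (fun k => fl (x / u j) (X k w))).
  set (xi := fun w => rsum (Datatypes.S N) (fun j => K * P j w)).
  assert (HM1 : 1 <= exp (1/2)) by (pose proof (exp_le_mono 0 (1/2) ltac:(lra)) as T0; rewrite exp_0 in T0; exact T0).
  assert (HL : forall j, 0 <= exp (1/2) * (Rabs (x / u j) + (x / u j) ^ 2)).
  { intros j. apply Rmult_le_pos; [left; apply exp_pos|]. pose proof (Rabs_pos (x / u j)); pose proof (pow2_ge_0 (x / u j)); lra. }
  assert (HPj : forall j, H S (P j)).
  { intros j. apply (H_prod S X (fl (x / u j)) (exp (1/2)) (exp (1/2) * (Rabs (x / u j) + (x / u j) ^ 2))); auto.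
    apply fl_bound. apply fl_lip. }
  assert (EPj : forall j, E S (P j) = Finite (rprod n (fun k => real (E S (fun w => fl (x / u j) (X k w)))))).
  { intros j. apply (E_prod S X (fl (x / u j)) (exp (1/2)) (exp (1/2) * (Rabs (x / u j) + (x / u j) ^ 2))); auto.
    apply fl_pos. apply fl_bound. apply fl_lip. }
  assert (Hcj : forall j, 2 * (x / u j) ^ 2 * (1 + b / u j) * Bup2 <= 24 * Q * x ^ 2).
  { intros j. rewrite <- Hbb. unfold Q. rewrite Hsq. unfold qn. rewrite <- Hbb, <- Hss.
    apply cbound; auto; try lra. }
  assert (Hbound : forall j, rprod n (fun k => real (E S (fun w => fl (x / u j) (X k w)))) <= exp (24 * Q * x ^ 2 * Delta)).
  { intros j.
    assert (Huj : 0 < u j) by (pose proof (Hu j); lra).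
    set (c := 2 * (x / u j) ^ 2 * (1 + b / u j)).
    eapply Rle_trans; [apply (rprod_le n _ (fun k => exp (c * G k)))|].
    - intros k. split.
      + pose proof (E_ge_cst S _ 0 (H_h S X (fl (x / u j)) (exp (1/2)) (exp (1/2) * (Rabs (x / u j) + (x / u j) ^ 2)) HX HM1 (HL j) (fl_bound _) (fl_lip _) k)
           (fun w => Rlt_le _ _ (fl_pos _ _))).
        rewrite (E_h_fin S X (fl (x / u j)) (exp (1/2)) (exp (1/2) * (Rabs (x / u j) + (x / u j) ^ 2)) HX HM1 (HL j) (fl_pos _) (fl_bound _) (fl_lip _) k) in H.
        exact H.
      + pose proof (e_bound S (X k) x (u j) b (G k) (HX k) (Hmean k) Huj Hb ltac:(lra) (Hg k) (Eg k)) as T1.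
        rewrite (E_h_fin S X (fl (x / u j)) (exp (1/2)) (exp (1/2) * (Rabs (x / u j) + (x / u j) ^ 2)) HX HM1 (HL j) (fl_pos _) (fl_bound _) (fl_lip _) k) in T1.
        simpl in T1. eapply Rle_trans; [exact T1|]. fold c. apply exp_ineq1_le.
    - rewrite rprod_exp. apply exp_le_mono.
      rewrite rsum_scal, HsumG. pose proof (Hcj j) as Tc. fold c in Tc. nra. }
  assert (HKP : forall j, E S (fun w => K * P j w) = Finite (K * rprod n (fun k => real (E S (fun w => fl (x / u j) (X k w)))))).
  { intros j. apply E_scal_fin; auto. apply exp_pos. }
  assert (Exi : Rbar_le (E S xi) (Finite (rsum (Datatypes.S N) (fun _ => T)))).
  { apply (E_rsum_le S (Datatypes.S N) (fun j w => K * P j w) (fun j => K * rprod n (fun k => real (E S (fun w => fl (x / u j) (X k w))))) (fun _ => T)).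
    - intros j. apply H_scal; auto.
    - exact HKP.
    - intros j. unfold T. apply Rmult_le_compat_l; [left; apply exp_pos| apply Hbound]. }
  rewrite rsum_const in Exi.
  unfold Vcap, Rbar_glb. match goal with |- Rbar_le (proj1_sig ?t) _ => destruct (proj2_sig t) as [Hlb _] end.
  apply (Rbar_le_trans _ (E S xi)).
  - apply Hlb. exists xi. split; [|split; [|split]]; auto.
    + apply H_rsum. intros j. apply H_scal; auto.
    + intros w [HS [HV1 HV2]].
      set (V := sqrt (Vn2 w)).
      assert (Hdel : delta * Bup2 = u0 * u0) by (unfold delta, u0; rewrite <- Hss; field; lra).
      assert (HVn : 0 <= Vn2 w) by nra.
      assert (HVV : V * V = Vn2 w) by (apply sqrt_sqrt; auto).
      assert (HV0 : 0 <= V) by apply sqrt_pos.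
      assert (HVl : u0 <= V) by nra.
      assert (HVu : V <= 3 * b) by nra.
      assert (Hgrid : V <= u0 * r ^ N).
      { pose proof (pow_bernoulli (/ x) N ltac:(left; apply Rinv_0_lt_compat; lra)).
        fold r in H.
        assert (INR N * / x >= 6 * sqrt qn).
        { apply Rle_ge. apply (Rmult_le_reg_r x); [lra|]. replace (INR N * / x * x) with (INR N) by (field; lra). lra. }
        assert (u0 * (6 * sqrt qn) = 3 * b) by (rewrite Hsq; unfold u0; field; lra).
        nra. }
      destruct (grid u0 r V N Hu0 Hr HVl Hgrid) as [j [Hj [Hj1 Hj2]]].
      eapply Rle_trans; [|apply (rsum_ge_term (Datatypes.S N) (fun j => K * P j w) j)].
      * unfold K, P. rewrite (rprod_ext n _ (fun k => exp ((x / u j) * X k w - (x / u j) ^ 2 * X k w ^ 2 / 2))) by (intros; reflexivity).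
        rewrite rprod_exp, rsum_lin, <- exp_plus.
        fold (Sn w). fold (Vn2 w). rewrite <- HVV.
        pose proof (event_arg x (u j) V (Sn w) Hx ltac:(pose proof (Hu j); lra)
           ltac:(split; [exact Hj1| simpl in Hj2; unfold u; fold r; lra]) HS).
        pose proof (exp_le_mono 0 _ H). rewrite exp_0 in H0. lra.
      * intros k. apply Rmult_le_pos; [left; apply exp_pos| left; apply rprod_pos; intros; apply fl_pos].
      * lia.
    + intros w. apply rsum_nonneg. intros j. apply Rmult_le_pos; [left; apply exp_pos| left; apply rprod_pos; intros; apply fl_pos].
  - eapply Rbar_le_trans; [exact Exi|]. simpl.
    unfold T, K, Q. apply final_ineq; auto.
Qed.
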